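(* Let $V=\{n\in\mathbb{Z} : n\geq 2,\ 5\nmid n\}$ and let $\Gamma_5$ be the directed graph on $V$ with up-edges $(n,(n+5)^2)$ and down-edges $(n^2,n)$ for $n\in V$. Let $B$ be a square-to-square conveyor belt path in $\Gamma_5$ consisting of fewer than $150$ steps, i.e. of the form $(UD)^i$ with $1\leq i<75$. (a) If the vertices $v_0,v_1,\dots,v_i$ of $B$ are congruent to $1$ modulo $5$, then its endpoint $v_i$ is at most $91^2$. (b) If these vertices are congruent to $4$ modulo $5$, then its endpoint $v_i$ is at most $183^2$.
   Context: A conveyor belt is a path in $\Gamma_5$ whose edge labels are $UD\,UD\cdots UD$ ($U$ = up-edge, $D$ = down-edge), i.e. $(UD)^i$ for some $i\geq 1$; it has $2i$ steps. Each $UD$ step takes a vertex $v$ to $(v+5)^2$ and then to $v+5$, so the belt visits $v_0, (v_0+5)^2, v_0+5, \dots$; write $v_j=v_0+5j$ for the vertices reached after each $UD$ step, so it begins at $v_0$ and ends at $v_i=v_0+5i$, and all $v_j$ are congruent modulo $5$. A conveyor belt is square-to-square if both its starting vertex $v_0$ and its ending vertex $v_i$ are perfect squares. *)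

(* Defs.v *)
From mathcomp Require Import all_boot all_order all_algebra.
Set Implicit Arguments. Unset Strict Implicit. Unset Printing Implicit Defensive.
Import Order.TTheory GRing.Theory Num.Theory.
Local Open Scope ring_scope.

Definition inV (n : int) : bool := (2 <= n) && ~~ (5 %| n)%Z.

Inductive lbl := LU | LD.

Definition edge (l : lbl) (x y : int) : bool :=
  [&& inV x, inV y &
    match l with
    | LU => y == (x + 5) ^+ 2
    | LD => x == y ^+ 2
    end].

Fixpoint walk (ls : seq lbl) (x : int) (p : seq int) : bool :=
  match ls, p with
  | [::], [::] => true
  | l :: ls', y :: p' => edge l x y && walk ls' y p'
  | _, _ => false
  end.

Definition conveyor_labels (i : nat) : seq lbl := flatten (nseq i [:: LU; LD]).

Definition is_square (x : int) : Prop := exists m : int, x = m ^+ 2.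

(* Main.v *)
Require Import Defs.
From mathcomp Require Import all_boot all_order all_algebra zify ring.
Import Order.TTheory GRing.Theory Num.Theory.
Local Open Scope ring_scope.

Lemma walk_belt (i : nat) (x : int) (p : seq int) :
  walk (conveyor_labels i) x p -> (0 < i)%N ->
  [/\ last x p = x + 5 * i%:Z, size p = (2 * i)%N & 2 <= x].
Proof.
elim: i x p => [//|i IH] x p /=.
case: p => [//|y [|z p]] /=; first by rewrite andbF.
rewrite /edge /inV /= => /and3P [/and3P [/andP [hx _] _ /eqP hy] /and3P [_ /andP [hz _] /eqP hz2] hw] _.
have ez : z = x + 5 by move: hy; rewrite hz2 => h; nia.
case: i IH hw => [|i] IH hw.
  by case: p hw => // _; rewrite ez; split => //; lia.
have [h1 h2 h3] := IH z p hw isT.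
split => //; first (rewrite h1 ez; lia).
by rewrite h2; lia.
Qed.

Lemma arith (i : nat) (a b : int) : (1 <= i < 75)%N -> 0 <= a -> 0 <= b ->
  a ^+ 2 + 5 * i%:Z = b ^+ 2 ->
  ((a ^+ 2 %% 5)%Z = 1 -> (b ^+ 2 %% 5)%Z = 1 -> b ^+ 2 <= 91 ^+ 2) /\
  ((a ^+ 2 %% 5)%Z = 4 -> (b ^+ 2 %% 5)%Z = 4 -> b ^+ 2 <= 183 ^+ 2).
Proof.
move=> hi ha hb he.
have hab : a < b by nia.
have hd : (b - a) * (b + a) = 5 * i%:Z by rewrite -[RHS](addKr (a ^+ 2)) he; ring.
have [d3|dl] := lerP 3 (b - a).
  have : b <= 63 by nia.
  by move=> hb63; split=> _ _; nia.
have [d1|d2] : b = a + 1 \/ b = a + 2 by lia.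
  subst b.
  have [k hk] : exists k, a = 5 * k + 2.
    exists ((a - 2) %/ 5)%Z; lia.
  subst a.
  split => h1 h2; first lia.
  have : 5 * k + 3 <= 183 by nia.
  move=> hk'; nia.
subst b.
have [k hk] : exists k, a = 5 * k + 4.
  exists ((a - 4) %/ 5)%Z; lia.
subst a.
split => h1 h2; last lia.
have : 5 * k + 6 <= 91 by nia.
move=> hk'; nia.
Qed.

Theorem lemma11 (i : nat) (x : int) (p : seq int) :
  (1 <= i < 75)%N ->
  walk (conveyor_labels i) x p ->
  is_square x -> is_square (last x p) ->
  ((forall j : nat, (j <= i)%N -> ((nth 0 (x :: p) (2 * j)) %% 5)%Z = 1) ->
     last x p <= 91 ^+ 2) /\
  ((forall j : nat, (j <= i)%N -> ((nth 0 (x :: p) (2 * j)) %% 5)%Z = 4) ->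
     last x p <= 183 ^+ 2).
Proof.
move=> hi hw [a ha] [b hb].
have [hl hs hx] := @walk_belt _ _ _ hw (andP hi).1.
have hnl : nth 0 (x :: p) (2 * i) = last x p.
  by rewrite -hs nth_last.
have ha' : x = `|a| ^+ 2 by rewrite ha -normrX ger0_norm // sqr_ge0.
have hb' : last x p = `|b| ^+ 2 by rewrite hb -normrX ger0_norm // sqr_ge0.
have he : `|a| ^+ 2 + 5 * i%:Z = `|b| ^+ 2 by rewrite -ha' -hb' hl.
have [A B] := @arith _ _ _ hi (normr_ge0 a) (normr_ge0 b) he.
split=> hj.
  rewrite hb'; apply: A; [rewrite -ha'; exact: (hj 0%N isT) | rewrite -hb' -hnl; exact: hj].
rewrite hb'; apply: B; [rewrite -ha'; exact: (hj 0%N isT) | rewrite -hb' -hnl; exact: hj].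
Qed.
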